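(* Let $T=(L,R,\tau)$ be a rewrite rule without cloning (i.e. $L,R$ are termgraphs and $\tau:|L|\to|R|$ is a total function) and let $m:L\to G$ be a graph morphism such that $|m|$ is injective. Then there exists a heterogeneous pushout of $T$ and $m$, i.e. an initial object in the category of heterogeneous cones over $T$ and $m$. Moreover, if $(\mathcal{H},\tau_1,\delta)$ is a pushout of $\tau$ and $|m|$ in the category of sets (so $\delta\circ\tau=\tau_1\circ|m|$ with $\tau_1:|G|\to\mathcal{H}$, $\delta:|R|\to\mathcal{H}$), then there is a unique graph $H$ with set of nodes $\mathcal{H}$ such that $\tau_1$ is strictly graphic on $|G|-|m(L)|$ and $\delta$ is strictly graphic on $|R|$; $\delta$ underlies a graph morphism $d:R\to H$, and $(H,\tau_1,d)$ is a heterogeneous pushout of $T$ and $m$.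
   Context: A signature $\Omega$ assigns an arity $\mathrm{ar}(\omega)\in\mathbb{N}$ to each symbol. For a function $f$, $f^*$ acts letterwise on strings. A termgraph (graph) $G=(\mathcal{N}_G,\mathcal{D}_G,\mathcal{L}_G,\mathcal{S}_G)$ has node set $|G|=\mathcal{N}_G$, labeled nodes $\mathcal{D}_G\subseteq\mathcal{N}_G$, labeling $\mathcal{L}_G:\mathcal{D}_G\to\Omega$ and successors $\mathcal{S}_G:\mathcal{D}_G\to\mathcal{N}_G^*$ with $|\mathcal{S}_G(n)|=\mathrm{ar}(\mathcal{L}_G(n))$. A graph morphism $g:G\to H$ is a function $g:|G|\to|H|$ with $g(\mathcal{D}_G)\subseteq\mathcal{D}_H$ and, for each labeled $n$, $\mathcal{L}_H(g(n))=\mathcal{L}_G(n)$ and $\mathcal{S}_H(g(n))=g^*(\mathcal{S}_G(n))$ (unlabeled nodes may map anywhere). A function $\gamma:|G|\to|H|$ is graphic at $n$ if $n$ is unlabeled or both $n,\gamma(n)$ are labeled with $\mathcal{L}_H(\gamma(n))=\mathcal{L}_G(n)$, $\mathcal{S}_H(\gamma(n))=\gamma^*(\mathcal{S}_G(n))$; strictly graphic at $n$ if both $n,\gamma(n)$ are unlabeled or both are labeled with these two equalities; (strictly) graphic on a set if so at each of its nodes. A rewrite rule without cloning is $T=(L,R,\tau)$ with $\tau:|L|\to|R|$ a function; a morphism of such rules $(L,R,\tau)\to(L_1,R_1,\tau_1)$ is a pair of graph morphisms $m:L\to L_1$, $d:R\to R_1$ with $|d|\circ\tau=\tau_1\circ|m|$.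 A heterogeneous cone over $T$ and $m:L\to G$ is a triple $(H,\tau_1,d)$ with $H$ a graph, $\tau_1:|G|\to|H|$ a function, $d:R\to H$ a graph morphism, such that $|d|\circ\tau=\tau_1\circ|m|$ and $\tau_1$ is graphic on $|G|-|m(L)|$. A morphism of heterogeneous cones $(H,\tau_1,d)\to(H',\tau_1',d')$ is a graph morphism $h:H\to H'$ with $|h|\circ\tau_1=\tau_1'$ and $h\circ d=d'$. *)

(* Defs.v *)
From mathcomp Require Import all_boot.
Set Implicit Arguments. Unset Strict Implicit. Unset Printing Implicit Defensive.

Record signature := Signature { sym : Type; ar : sym -> nat }.

(* A termgraph over node type N: each node is either unlabeled (None) or
   labeled by a symbol together with its successor string, whose length is
   the arity of the symbol.  D_G = {n | glab n <> None}. *)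
Record graph (S : signature) (N : Type) := Graph {
  glab : N -> option (sym S * seq N);
  gwf : forall n s l, glab n = Some (s, l) -> size l = ar s }.

Section Defs.
Variable S : signature.

Definition is_morph (N1 N2 : Type) (G : graph S N1) (H : graph S N2)
  (g : N1 -> N2) : Prop :=
  forall n s l, glab G n = Some (s, l) -> glab H (g n) = Some (s, map g l).

Definition graphic_at (N1 N2 : Type) (G : graph S N1) (H : graph S N2)
  (gamma : N1 -> N2) (n : N1) : Prop :=
  glab G n = None \/
  exists s l, glab G n = Some (s, l) /\ glab H (gamma n) = Some (s, map gamma l).

Definition strictly_graphic_at (N1 N2 : Type) (G : graph S N1) (H : graph S N2)
  (gamma : N1 -> N2) (n : N1) : Prop :=
  (glab G n = None /\ glab H (gamma n) = None) \/
  exists s l, glab G n = Some (s, l) /\ glab H (gamma n) = Some (s, map gamma l).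

Definition outside_image (NL NG : Type) (m : NL -> NG) (n : NG) : Prop :=
  ~ exists x, m x = n.

Definition het_cone (NL NR NG NH : Type) (L : graph S NL) (R : graph S NR)
  (G : graph S NG) (tau : NL -> NR) (m : NL -> NG)
  (H : graph S NH) (tau1 : NG -> NH) (d : NR -> NH) : Prop :=
  is_morph R H d /\
  (forall x, d (tau x) = tau1 (m x)) /\
  (forall n, outside_image m n -> graphic_at G H tau1 n).

Definition het_cone_morph (NR NG NH NH' : Type)
  (H : graph S NH) (tau1 : NG -> NH) (d : NR -> NH)
  (H' : graph S NH') (tau1' : NG -> NH') (d' : NR -> NH') (h : NH -> NH') : Prop :=
  is_morph H H' h /\ (forall n, h (tau1 n) = tau1' n) /\ (forall r, h (d r) = d' r).

Definition het_pushout (NL NR NG NH : Type) (L : graph S NL) (R : graph S NR)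
  (G : graph S NG) (tau : NL -> NR) (m : NL -> NG)
  (H : graph S NH) (tau1 : NG -> NH) (d : NR -> NH) : Prop :=
  het_cone L R G tau m H tau1 d /\
  forall (NH' : Type) (H' : graph S NH') (tau1' : NG -> NH') (d' : NR -> NH'),
    het_cone L R G tau m H' tau1' d' ->
    (exists h, het_cone_morph H tau1 d H' tau1' d' h) /\
    (forall h1 h2, het_cone_morph H tau1 d H' tau1' d' h1 ->
                   het_cone_morph H tau1 d H' tau1' d' h2 -> forall x, h1 x = h2 x).

End Defs.

Definition set_pushout (A B C NH : Type) (tau : A -> B) (f : A -> C)
  (tau1 : C -> NH) (delta : B -> NH) : Prop :=
  (forall x, delta (tau x) = tau1 (f x)) /\
  forall (X : Type) (g1 : C -> X) (g2 : B -> X),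
    (forall x, g2 (tau x) = g1 (f x)) ->
    (exists u : NH -> X, (forall c, u (tau1 c) = g1 c) /\ (forall b, u (delta b) = g2 b)) /\
    (forall u v : NH -> X,
       (forall c, u (tau1 c) = g1 c) -> (forall b, u (delta b) = g2 b) ->
       (forall c, v (tau1 c) = g1 c) -> (forall b, v (delta b) = g2 b) ->
       forall h, u h = v h).

(* Main.v *)
Require Import Defs.
From mathcomp Require Import all_boot.
From Stdlib Require Import ClassicalEpsilon PropExtensionality ProofIrrelevance.
Set Implicit Arguments. Unset Strict Implicit.

Definition lift (S : signature) (A B : Type) (f : A -> B)
  (o : option (sym S * seq A)) : option (sym S * seq B) :=
  match o with Some (s, l) => Some (s, map f l) | None => None end.

Lemma lift_wf (S : signature) (A B : Type) (G : graph S A) (f : A -> B) n s l :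
  lift f (glab G n) = Some (s, l) -> size l = ar s.
Proof.
  unfold lift. destruct (glab G n) as [[s' l']|] eqn:E; intro H; [|discriminate].
  injection H as <- <-. rewrite size_map. exact (gwf E).
Qed.

Definition hlab (S : signature) (NL NR NG NH : Type) (R : graph S NR) (G : graph S NG)
  (m : NL -> NG) (tau1 : NG -> NH) (delta : NR -> NH) (h : NH) : option (sym S * seq NH) :=
  match excluded_middle_informative (exists r, delta r = h) with
  | left e => lift delta (glab R (proj1_sig (constructive_indefinite_description _ e)))
  | right _ =>
    match excluded_middle_informative (exists n, outside_image m n /\ tau1 n = h) with
    | left e => lift tau1 (glab G (proj1_sig (constructive_indefinite_description _ e)))
    | right _ => None
    end
  end.

Lemma hlab_wf (S : signature) (NL NR NG NH : Type) (R : graph S NR) (G : graph S NG)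
  (m : NL -> NG) (tau1 : NG -> NH) (delta : NR -> NH) :
  forall n s l, hlab R G m tau1 delta n = Some (s, l) -> size l = ar s.
Proof.
  intros n s l. unfold hlab.
  destruct (excluded_middle_informative _) as [e|ne]; [apply lift_wf|].
  destruct (excluded_middle_informative _) as [e|ne']; [apply lift_wf|discriminate].
Qed.

Definition mkH (S : signature) (NL NR NG NH : Type) (R : graph S NR) (G : graph S NG)
  (m : NL -> NG) (tau1 : NG -> NH) (delta : NR -> NH) : graph S NH :=
  @Graph S NH (hlab R G m tau1 delta) (@hlab_wf S NL NR NG NH R G m tau1 delta).

Lemma sg_of_lift (S : signature) (A B : Type) (G : graph S A) (H : graph S B) f n :
  glab H (f n) = lift f (glab G n) -> strictly_graphic_at G H f n.
Proof.
  unfold strictly_graphic_at. destruct (glab G n) as [[s l]|]; simpl; intro E.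
  - right. exists s, l. split; auto.
  - left. split; auto.
Qed.

Lemma lift_of_sg (S : signature) (A B : Type) (G : graph S A) (H : graph S B) f n :
  strictly_graphic_at G H f n -> glab H (f n) = lift f (glab G n).
Proof.
  intros [[h1 h2]|[s [l [h1 h2]]]]; rewrite h1 h2; reflexivity.
Qed.

Section P2.
Variables (S : signature) (NL NR NG : Type)
  (L : graph S NL) (R : graph S NR) (G : graph S NG)
  (tau : NL -> NR) (m : NL -> NG) (minj : injective m)
  (NH : Type) (tau1 : NG -> NH) (delta : NR -> NH)
  (P : set_pushout tau m tau1 delta).

Lemma delta_inj r r' : delta r = delta r' -> r = r'.
Proof.
  intro E. destruct P as [Pc Pu].
  destruct (Pu Prop (fun c => exists x, m x = c /\ tau x = r) (fun b => b = r)) as [[u [hu1 hu2]] _].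
  { intro x. apply propositional_extensionality. split.
    - intro H. exists x. auto.
    - intros [x' [h1 h2]]. rewrite <- (minj h1). exact h2. }
  pose proof (hu2 r) as A. pose proof (hu2 r') as B. rewrite E B in A.
  symmetry. rewrite A. reflexivity.
Qed.

Definition upt n := (fun c : NG => c = n).

Lemma out_u n : outside_image m n ->
  exists u : NH -> Prop, (forall c, u (tau1 c) = (c = n)) /\ (forall b, u (delta b) = False).
Proof.
  intro O. destruct P as [Pc Pu].
  destruct (Pu Prop (fun c => c = n) (fun b => False)) as [[u [hu1 hu2]] _].
  { intro x. apply propositional_extensionality. split; [tauto|].
    intro H. apply O. eauto. }
  exists u. auto.
Qed.

Lemma tau1_delta n r : outside_image m n -> tau1 n <> delta r.
Proof.
  intros O E. destruct (out_u O) as [u [h1 h2]].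
  pose proof (h1 n) as A. rewrite E h2 in A. rewrite A. reflexivity.
Qed.

Lemma tau1_inj n n' : outside_image m n -> tau1 n' = tau1 n -> n' = n.
Proof.
  intros O E. destruct (out_u O) as [u [h1 h2]].
  pose proof (h1 n') as A. rewrite E h1 in A. rewrite <- A. reflexivity.
Qed.

Lemma surj h : (exists r, delta r = h) \/ exists n, outside_image m n /\ tau1 n = h.
Proof.
  destruct P as [Pc Pu].
  destruct (Pu Prop (fun _ => True) (fun _ => True)) as [_ U]; [reflexivity|].
  assert (A : (fun _ : NH => True) h =
     (fun h => (exists r, delta r = h) \/ exists n, outside_image m n /\ tau1 n = h) h).
  { apply (U (fun _ => True) (fun h => (exists r, delta r = h) \/ exists n, outside_image m n /\ tau1 n = h)); intros; try reflexivity; apply propositional_extensionality; split; auto; intros _.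
    - destruct (classic (exists x, m x = c)) as [[x hx]|nx].
      + left. exists (tau x). rewrite Pc hx. reflexivity.
      + right. exists c. split; auto.
    - left. eauto. }
  simpl in A. rewrite <- A. exact I.
Qed.

Lemma hlab_delta r : hlab R G m tau1 delta (delta r) = lift delta (glab R r).
Proof.
  unfold hlab. destruct (excluded_middle_informative _) as [e|ne].
  - destruct (constructive_indefinite_description _ e) as [r' hr']. simpl.
    rewrite (delta_inj hr'). reflexivity.
  - exfalso. apply ne. eauto.
Qed.

Lemma hlab_tau1 n : outside_image m n -> hlab R G m tau1 delta (tau1 n) = lift tau1 (glab G n).
Proof.
  intro O. unfold hlab. destruct (excluded_middle_informative _) as [e|ne].
  - exfalso. destruct e as [r hr]. exact (tau1_delta O (esym hr)).
  - destruct (excluded_middle_informative _) as [e|ne'].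
    + destruct (constructive_indefinite_description _ e) as [n' [o' hn']]. simpl.
      rewrite (tau1_inj O hn'). reflexivity.
    + exfalso. apply ne'. eauto.
Qed.

Lemma part2 (hm : is_morph L G m) :
      exists H : graph S NH,
        ((forall n, outside_image m n -> strictly_graphic_at G H tau1 n) /\
         (forall r, strictly_graphic_at R H delta r)) /\
        (forall H' : graph S NH,
           (forall n, outside_image m n -> strictly_graphic_at G H' tau1 n) ->
           (forall r, strictly_graphic_at R H' delta r) ->
           forall x, glab H' x = glab H x) /\
        is_morph R H delta /\
        het_pushout L R G tau m H tau1 delta.
Proof.
  exists (mkH R G m tau1 delta).
  assert (SG1 : forall n, outside_image m n -> strictly_graphic_at G (mkH R G m tau1 delta) tau1 n).
  { intros n O. apply sg_of_lift. apply hlab_tau1. exact O. }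
  assert (SG2 : forall r, strictly_graphic_at R (mkH R G m tau1 delta) delta r).
  { intros r. apply sg_of_lift. apply hlab_delta. }
  assert (MD : is_morph R (mkH R G m tau1 delta) delta).
  { intros r s l E. rewrite (lift_of_sg (SG2 r)) E. reflexivity. }
  destruct P as [Pc Pu].
  split; [split; auto|]. split.
  { intros H' h1 h2 x. destruct (surj x) as [[r <-]|[n [O <-]]].
    - rewrite (lift_of_sg (h2 r)) (lift_of_sg (SG2 r)). reflexivity.
    - rewrite (lift_of_sg (h1 n O)) (lift_of_sg (SG1 n O)). reflexivity. }
  split; [exact MD|].
  split.
  { split; [exact MD|]. split; [exact Pc|].
    intros n O. destruct (SG1 n O) as [[a _]|[s [l [a b]]]]; [left; auto|right; eauto]. }
  intros NH' H' t' d' [Md' [Cd' Gd']].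
  destruct (Pu NH' t' d' (fun x => Cd' x)) as [[u [hu1 hu2]] U].
  split.
  - exists u. split; [|split; auto].
    intros h s l E. destruct (surj h) as [[r <-]|[n [O <-]]].
    + rewrite hu2. simpl in E. rewrite hlab_delta in E. unfold lift in E.
      destruct (glab R r) as [[s' l']|] eqn:Er; [|discriminate].
      injection E as <- <-. rewrite (Md' _ _ _ Er) -map_comp.
      f_equal. f_equal. apply eq_map. intro y. simpl. symmetry. apply hu2.
    + rewrite hu1. simpl in E. rewrite (hlab_tau1 O) in E. unfold lift in E.
      destruct (glab G n) as [[s' l']|] eqn:En; [|discriminate].
      injection E as <- <-.
      destruct (Gd' n O) as [a|[s2 [l2 [a b]]]]; [rewrite En in a; discriminate|].
      rewrite En in a. injection a as <- <-. rewrite b -map_comp.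
      f_equal. f_equal. apply eq_map. intro y. simpl. symmetry. apply hu1.
  - intros h1 h2 [_ [a1 b1]] [_ [a2 b2]] x. exact (U h1 h2 a1 b1 a2 b2 x).
Qed.

End P2.

Section P1.
Variables (NL NR NG : Type) (tau : NL -> NR) (m : NL -> NG) (minj : injective m).

Definition NH0 := (NR + {n : NG | outside_image m n})%type.

Definition t1 (n : NG) : NH0 :=
  match excluded_middle_informative (exists x, m x = n) with
  | left e => inl (tau (proj1_sig (constructive_indefinite_description _ e)))
  | right ne => inr (exist _ n ne)
  end.

Lemma sp0 : set_pushout tau m t1 inl.
Proof.
  split.
  { intro x. unfold t1. destruct (excluded_middle_informative _) as [e|ne].
    - destruct (constructive_indefinite_description _ e) as [x' hx']. simpl.
      rewrite (minj hx'). reflexivity.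
    - exfalso. apply ne. eauto. }
  intros X g1 g2 Hc. split.
  - exists (fun h => match h with inl b => g2 b | inr (exist n _) => g1 n end).
    split; [|reflexivity]. intro c. unfold t1.
    destruct (excluded_middle_informative _) as [e|ne].
    + destruct (constructive_indefinite_description _ e) as [x' hx']. simpl.
      rewrite Hc hx'. reflexivity.
    + reflexivity.
  - intros u v hu1 hu2 hv1 hv2 [b|[n p]].
    + rewrite hu2 hv2. reflexivity.
    + assert (E : t1 n = inr (exist (fun n => outside_image m n) n p)).
      { unfold t1. destruct (excluded_middle_informative _) as [e|ne].
        - contradiction.
        - f_equal. f_equal. apply proof_irrelevance. }
      rewrite <- E, hu1, hv1. reflexivity.
Qed.
End P1.

Theorem mainTheorem2 (S : signature) (NL NR NG : Type)
  (L : graph S NL) (R : graph S NR) (G : graph S NG)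
  (tau : NL -> NR) (m : NL -> NG) (hm : is_morph L G m) (minj : injective m) :
  (exists (NH : Type) (H : graph S NH) (tau1 : NG -> NH) (d : NR -> NH),
      het_pushout L R G tau m H tau1 d) /\
  (forall (NH : Type) (tau1 : NG -> NH) (delta : NR -> NH),
      set_pushout tau m tau1 delta ->
      exists H : graph S NH,
        ((forall n, outside_image m n -> strictly_graphic_at G H tau1 n) /\
         (forall r, strictly_graphic_at R H delta r)) /\
        (forall H' : graph S NH,
           (forall n, outside_image m n -> strictly_graphic_at G H' tau1 n) ->
           (forall r, strictly_graphic_at R H' delta r) ->
           forall x, glab H' x = glab H x) /\
        is_morph R H delta /\
        het_pushout L R G tau m H tau1 delta).
Proof.
  assert (P2 : forall (NH : Type) (tau1 : NG -> NH) (delta : NR -> NH),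
      set_pushout tau m tau1 delta ->
      exists H : graph S NH,
        ((forall n, outside_image m n -> strictly_graphic_at G H tau1 n) /\
         (forall r, strictly_graphic_at R H delta r)) /\
        (forall H' : graph S NH,
           (forall n, outside_image m n -> strictly_graphic_at G H' tau1 n) ->
           (forall r, strictly_graphic_at R H' delta r) ->
           forall x, glab H' x = glab H x) /\
        is_morph R H delta /\
        het_pushout L R G tau m H tau1 delta).
  { intros NH tau1 delta P. exact (@part2 S NL NR NG L R G tau m minj NH tau1 delta P hm). }
  split; [|exact P2].
  destruct (P2 _ _ _ (sp0 tau minj)) as [H [_ [_ [_ HP]]]].
  exists (NH0 NR m), H, (t1 tau m), inl. exact HP.
Qed.
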